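(* Let $H$ be a graph with an optimal vector coloring $i\mapsto p_i$, and let $G$ be a graph with $H\subseteq G\subseteq H'(p)$ (all three graphs having vertex set $V(H)$). Then: (i) $i\mapsto p_i$ is an optimal vector coloring of $G$; in particular $\chi_v(H)=\chi_v(G)$. (ii) If $H$ is uniquely vector colorable, then $G$ is uniquely vector colorable, and $i\mapsto p_i$ is the unique optimal vector coloring of $G$ (up to equality of Gram matrices). Moreover, if $\langle p_i,p_j\rangle<-1/(\chi_v(G)-1)$ for some edge $i\sim_G j$, then the optimal vector coloring $i\mapsto p_i$ is not strict for $G$, and thus $\chi_v(G)<\chi_{sv}(G)$.
   Context: A vector $t$-coloring of a graph $G$ ($t\ge2$) is an assignment $i\mapsto p_i$ of unit vectors in some $\mathbb{R}^d$ to $V(G)$ with $\langle p_i,p_j\rangle\le -1/(t-1)$ whenever $i\sim j$; it is strict if equality holds for every edge. $\chi_v(G)$ (resp. $\chi_{sv}(G)$) is the smallest $t\ge 2$ for which a (resp. strict) vector $t$-coloring exists; a vector $\chi_v(G)$-coloring is optimal. $G$ is uniquely vector colorable if any two optimal vector colorings of $G$ have equal Gram matrices. For an optimal vector coloring $i\mapsto p_i$ of $H$, $H'(p)$ is the graph with vertex set $V(H)$ in which distinct $u,v$ are adjacent iff $\langle p_u,p_v\rangle\le -1/(\chi_v(H)-1)$. Subgraph inclusion $H\subseteq G$ means every edge of $H$ is an edge of $G$. *)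

(* Defs.v *)
From HB Require Import structures.
From mathcomp Require Import all_boot all_order all_algebra.
From mathcomp Require Import classical_sets reals.
Set Implicit Arguments. Unset Strict Implicit. Unset Printing Implicit Defensive.
Import Order.TTheory GRing.Theory Num.Theory.
Local Open Scope ring_scope.
Local Open Scope classical_set_scope.

Section VC.
Variable R : realType.
Variable V : finType.

Definition dotp (d : nat) (u v : 'rV[R]_d) : R := (u *m v^T) 0 0.

Definition is_graph (e : rel V) : Prop :=
  symmetric e /\ irreflexive e.

Definition vec_coloring (e : rel V) (t : R) (d : nat) (p : V -> 'rV[R]_d) : Prop :=
  (forall i, dotp (p i) (p i) = 1) /\
  (forall i j, e i j -> dotp (p i) (p j) <= - 1 / (t - 1)).

Definition strict_vec_coloring (e : rel V) (t : R) (d : nat) (p : V -> 'rV[R]_d) : Prop :=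
  (forall i, dotp (p i) (p i) = 1) /\
  (forall i j, e i j -> dotp (p i) (p j) = - 1 / (t - 1)).

Definition chi_v (e : rel V) : R :=
  inf [set t : R | 2 <= t /\ exists d (p : V -> 'rV[R]_d), vec_coloring e t p].

Definition chi_sv (e : rel V) : R :=
  inf [set t : R | 2 <= t /\ exists d (p : V -> 'rV[R]_d), strict_vec_coloring e t p].

Definition optimal_vec_coloring (e : rel V) (d : nat) (p : V -> 'rV[R]_d) : Prop :=
  vec_coloring e (chi_v e) p.

Definition uniquely_vector_colorable (e : rel V) : Prop :=
  forall d1 (p1 : V -> 'rV[R]_d1) d2 (p2 : V -> 'rV[R]_d2),
    optimal_vec_coloring e p1 -> optimal_vec_coloring e p2 ->
    forall i j, dotp (p1 i) (p1 j) = dotp (p2 i) (p2 j).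

Definition Hprime (e : rel V) (d : nat) (p : V -> 'rV[R]_d) : rel V :=
  fun u v => (u != v) && (dotp (p u) (p v) <= - 1 / (chi_v e - 1)).

Definition subgraph (e1 e2 : rel V) : Prop := forall i j, e1 i j -> e2 i j.

End VC.

(* Main.v *)
Require Import Defs.
From HB Require Import structures.
From mathcomp Require Import all_boot all_order all_algebra.
From mathcomp Require Import classical_sets reals.
From mathcomp Require Import all_classical all_reals all_analysis.
From mathcomp Require Import ring lra.
Import Order.TTheory GRing.Theory Num.Theory numFieldNormedType.Exports.
Local Open Scope ring_scope.

Section Basics.
Context {R : realType}.

Lemma dotpE {n} (u v : 'rV[R]_n) : dotp u v = \sum_l u 0 l * v 0 l.
Proof. by rewrite /dotp !mxE; apply: eq_bigr => l _; rewrite mxE. Qed.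

Lemma dotpC {n} (u v : 'rV[R]_n) : dotp u v = dotp v u.
Proof. by rewrite !dotpE; apply: eq_bigr => l _; rewrite mulrC. Qed.

Lemma dotpDl {n} (u v w : 'rV[R]_n) : dotp (u + v) w = dotp u w + dotp v w.
Proof. by rewrite !dotpE -big_split; apply: eq_bigr => l _; rewrite mxE mulrDl. Qed.

Lemma dotpZl {n} a (u w : 'rV[R]_n) : dotp (a *: u) w = a * dotp u w.
Proof. by rewrite !dotpE mulr_sumr; apply: eq_bigr => l _; rewrite mxE mulrA. Qed.

Lemma dotpNl {n} (u w : 'rV[R]_n) : dotp (- u) w = - dotp u w.
Proof. by rewrite -scaleN1r dotpZl mulN1r. Qed.

Lemma dotpBl {n} (u v w : 'rV[R]_n) : dotp (u - v) w = dotp u w - dotp v w.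
Proof. by rewrite dotpDl dotpNl. Qed.

Lemma dotpDr {n} (u v w : 'rV[R]_n) : dotp w (u + v) = dotp w u + dotp w v.
Proof. by rewrite dotpC dotpDl !(dotpC w). Qed.

Lemma dotpZr {n} a (u w : 'rV[R]_n) : dotp w (a *: u) = a * dotp w u.
Proof. by rewrite dotpC dotpZl dotpC. Qed.

Lemma dotpBr {n} (u v w : 'rV[R]_n) : dotp w (u - v) = dotp w u - dotp w v.
Proof. by rewrite dotpC dotpBl !(dotpC w). Qed.

Lemma dotp_ge0 {n} (u : 'rV[R]_n) : 0 <= dotp u u.
Proof. by rewrite dotpE; apply: sumr_ge0 => l _; rewrite -expr2 sqr_ge0. Qed.

Lemma dotp_eq0 {n} (u : 'rV[R]_n) : dotp u u = 0 -> u = 0.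
Proof.
rewrite dotpE => /eqP; rewrite psumr_eq0; last by move=> l _; rewrite -expr2 sqr_ge0.
move=> /allP H; apply/rowP => l; rewrite mxE.
by have := H l (mem_index_enum l); rewrite /= mulf_eq0 orbb => /eqP.
Qed.

Lemma dotp_mulmx {n} m (u v : 'rV[R]_n) (A : 'M[R]_(n, m)) :
  dotp (u *m A) (v *m A) = ((u *m (A *m A^T)) *m v^T) 0 0.
Proof. by rewrite /dotp trmx_mul !mulmxA. Qed.

Lemma dotp_orth {n} m (u v : 'rV[R]_n) (A : 'M[R]_(n, m)) :
  A *m A^T = 1%:M -> dotp (u *m A) (v *m A) = dotp u v.
Proof. by move=> h; rewrite dotp_mulmx h mulmx1. Qed.

Lemma unit_dotp_ge {n} (u v : 'rV[R]_n) :
  dotp u u = 1 -> dotp v v = 1 -> -1 <= dotp u v.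
Proof.
move=> hu hv; have := dotp_ge0 (u + v).
rewrite dotpDl !dotpDr hu hv (dotpC v u); lra.
Qed.

End Basics.

Section Red.
Context {R : realType}.

Lemma pad_mx (d N : nat) : (d <= N)%N -> exists E : 'M[R]_(d, N), E *m E^T = 1%:M.
Proof.
move=> h; exists (\matrix_(a, b) ((a : nat) == b)%:R).
apply/matrixP => a b; rewrite !mxE (bigD1 (widen_ord h a)) //= big1 ?addr0.
  by rewrite !mxE /= eqxx mul1r eq_sym.
by move=> l /negP hl; rewrite !mxE; case: eqP => [e|]; [case: hl; apply/eqP/val_inj|rewrite mul0r].
Qed.

Lemma householder {n} (a b : 'rV[R]_n) : dotp a a = dotp b b ->
  exists U : 'M[R]_n, U *m U^T = 1%:M /\ a *m U = b.
Proof.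
move=> hab; set u := a - b; set s := dotp u u.
have [s0|sn0] := eqVneq s 0.
  exists 1%:M; rewrite trmx1 mulmx1 mulmx1; split=> //.
  by apply/eqP; rewrite -subr_eq0; apply/eqP/dotp_eq0.
set k := 2 / s.
have uu : u *m u^T = s%:M by rewrite [LHS]mx11_scalar.
set P := u^T *m u.
have PP : P *m P = s *: P by rewrite /P mulmxA -(mulmxA _ u) uu mul_mx_scalar scalemxAl.
have PT : P^T = P by rewrite /P trmx_mul trmxK.
exists (1%:M - k *: P); split.
  have -> : (1%:M - k *: P)^T = 1%:M - k *: P.
    by apply/matrixP => i j; rewrite -[in RHS]PT !mxE eq_sym.
  rewrite mulmxBl mulmxBr mulmxBr mul1mx mulmx1.
  rewrite -!scalemxAl -!scalemxAr PP !scalerA mul1mx.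
  have -> : k * k * s = k + k by rewrite /k; field.
  by rewrite scalerDl opprB addrK subrK.
rewrite mulmxBr mulmx1 -scalemxAr /P mulmxA.
have -> : a *m u^T = (dotp a u)%:M by rewrite [LHS]mx11_scalar.
rewrite mul_scalar_mx scalerA.
have -> : k * dotp a u = 1.
  have hs : s = 2 * dotp a u.
    by rewrite /s /u !dotpBl !dotpBr -hab (dotpC b a); ring.
  by rewrite /k hs; field; apply: contraNneq sn0 => h; rewrite hs h mulr0.
by rewrite scale1r /u opprB addrCA subrr addr0.
Qed.


Definition erow {n} (l : 'I_n) : 'rV[R]_n := delta_mx 0 l.

Lemma dotp_erow {n} (y : 'rV[R]_n) l : dotp y (erow l) = y 0 l.
Proof.
rewrite dotpE (bigD1 l) //= big1 ?addr0; first by rewrite !mxE !eqxx mulr1.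
by move=> m /negPf hm; rewrite !mxE hm andbF mulr0.
Qed.

Lemma dotp_erowK {n} (l : 'I_n) : dotp (erow l) (erow l) = 1.
Proof. by rewrite dotp_erow !mxE !eqxx. Qed.

Context {V : finType}.

Lemma red1 {d} (q : V -> 'rV[R]_d.+1) : (#|V| < d.+1)%N ->
  exists q' : V -> 'rV[R]_d, forall i j, dotp (q' i) (q' j) = dotp (q i) (q j).
Proof.
move=> hV.
pose Qm : 'M[R]_(#|V|, d.+1) := \matrix_(a, l) q (enum_val a) 0 l.
have kn0 : kermx Qm^T != 0.
  rewrite -mxrank_eq0 mxrank_ker mxrank_tr subn_eq0 -ltnNge.
  exact: leq_ltn_trans (rank_leq_row Qm) hV.
have [w /sub_kermxP hw w0] := rowV0Pn kn0.
have hq : forall i, dotp (q i) w = 0.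
  move=> i; have := congr1 (fun X : 'M[R]_(1, #|V|) => X 0 (enum_rank i)) hw.
  rewrite !mxE => h; rewrite dotpE -[RHS]h; apply: eq_bigr => l _.
  by rewrite !mxE enum_rankK mulrC.
pose al := Num.sqrt (dotp w w).
have wpos : 0 < dotp w w.
  rewrite lt_def dotp_ge0 andbT; apply: contra w0 => /eqP; move/dotp_eq0 => ->.
  by [].
have al0 : al != 0 by rewrite /al sqrtr_eq0 -ltNge.
pose b := al *: erow (@ord_max d).
have hb : dotp w w = dotp b b.
  by rewrite /b dotpZl dotpZr dotp_erowK mulr1 -expr2 sqr_sqrtr // dotp_ge0.
have [U [hU hwU]] := householder _ _ hb.
pose y i := q i *m U.
have ylast : forall i, y i 0 ord_max = 0.
  move=> i; rewrite -dotp_erow.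
  have -> : erow ord_max = al^-1 *: (w *m U) by rewrite hwU /b scalerA mulVf // scale1r.
  by rewrite dotpZr /y dotp_orth // hq mulr0.
exists (fun i => \row_(l < d) y i 0 (widen_ord (leqnSn d) l)) => i j.
rewrite -/(y i) -/(y j).
transitivity (dotp (y i) (y j)); last by rewrite /y dotp_orth.
rewrite [RHS]dotpE big_ord_recr /= ylast mul0r addr0 dotpE.
by apply: eq_bigr => l _; rewrite !mxE.
Qed.

Lemma pad_col {d N} (q : V -> 'rV[R]_d) : (d <= N)%N ->
  exists q' : V -> 'rV[R]_N, forall i j, dotp (q' i) (q' j) = dotp (q i) (q j).
Proof.
move=> /pad_mx [E hE]; exists (fun i => q i *m E) => i j; exact: dotp_orth.
Qed.

Lemma dimred N : (#|V| <= N)%N -> forall d (q : V -> 'rV[R]_d),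
  exists q' : V -> 'rV[R]_N, forall i j, dotp (q' i) (q' j) = dotp (q i) (q j).
Proof.
move=> hN; elim=> [|d IH] q; first exact: pad_col.
have [hd|hd] := leqP d.+1 N; first exact: pad_col.
have [q1 h1] := red1 q (leq_ltn_trans hN hd).
have [q2 h2] := IH q1; exists q2 => i j; by rewrite h2 h1.
Qed.

End Red.

Section Compact.
Local Open Scope classical_set_scope.
Context {R : realType} {V : finType}.
Local Notation N := #|V|.

Definition Pstr (G : rel V) (i0 j0 : V) (q : V -> 'rV[R]_N) :=
  (forall i, dotp (q i) (q i) = 1) /\
  (forall i j, G i j -> dotp (q i) (q j) = dotp (q i0) (q j0)).

Definition dec (x : 'rV[R]_(N * N)) (i : V) : 'rV[R]_N :=
  \row_l x 0 (mxvec_index (enum_rank i) l).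
Definition enc (q : V -> 'rV[R]_N) : 'rV[R]_(N * N) :=
  mxvec (\matrix_(a, l) q (enum_val a) 0 l).

Lemma dec_enc q i : dec (enc q) i = q i.
Proof. by apply/rowP => l; rewrite !mxE mxvecE mxE enum_rankK. Qed.

Definition Dx (x : 'rV[R]_(N * N)) i j := dotp (dec x i) (dec x j).

Lemma Dx_cont (i j : V) : continuous (fun x : 'rV[R]_(N * N) => Dx x i j).
Proof.
have -> : (fun x => Dx x i j) = (fun x : 'rV[R]_(N * N) =>
    \big[+%R/0]_(l <- index_enum 'I_N | xpredT l)
       (x 0 (mxvec_index (enum_rank i) l) * x 0 (mxvec_index (enum_rank j) l))).
  by apply: funext => x; rewrite /Dx dotpE; apply: eq_bigr => l _; rewrite !mxE.
apply: continuous_big; first exact: add_continuous.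
move=> l _ x; apply: continuousM; exact: coord_continuous.
Qed.

Lemma min_strict (G : rel V) (i0 j0 : V) :
  (exists q, Pstr G i0 j0 q) ->
  exists m, Pstr G i0 j0 m /\
    forall q, Pstr G i0 j0 q -> dotp (m i0) (m j0) <= dotp (q i0) (q j0).
Proof.
move=> [q0 hq0].
pose A := [set x : 'rV[R]_(N * N) | (forall i, Dx x i i = 1) /\
          (forall ij, G ij.1 ij.2 -> Dx x ij.1 ij.2 = Dx x i0 j0)].
have PA : forall q, Pstr G i0 j0 q -> A (enc q).
  move=> q [h1 h2]; split=> [i|ij hij]; rewrite /Dx !dec_enc; [exact: h1|exact: h2].
have AP : forall x, A x -> Pstr G i0 j0 (dec x).
  by move=> x [h1 h2]; split=> [i|i j hij]; [exact: h1|exact: (h2 (i, j))].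
have clA : closed A.
  have -> : A = \bigcap_(i in setT) ((fun x => Dx x i i) @^-1` [set 1]) `&`
       \bigcap_(ij in [set ij : V * V | G ij.1 ij.2])
          ((fun x => Dx x ij.1 ij.2 - Dx x i0 j0) @^-1` [set 0]).
    apply/seteqP; split=> x /=.
      move=> [h1 h2]; split=> [i _|ij hij] /=; first exact: h1.
      by rewrite h2 // subrr.
    move=> [h1 h2]; split=> [i|ij hij]; first exact: h1.
    by apply/eqP; rewrite -subr_eq0; apply/eqP; apply: h2.
  apply: closedI; apply: closed_bigI.
    move=> i _; apply: preimage_closed; last exact: closed_eq.
    by move=> x _; apply: Dx_cont.
  move=> ij _; apply: preimage_closed; last exact: closed_eq.
  move=> x _; exact: (continuousB (Dx_cont ij.1 ij.2 x) (Dx_cont i0 j0 x)).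
have cA : compact A.
  have hcube : compact [set v : 'rV[R]_(N * N) | forall i, `[-1, 1]%classic (v ord0 i)].
    exact: (@rV_compact R (N * N) (fun _ => `[-1, 1]%classic) (fun _ => @segment_compact R _ _)).
  apply: (subclosed_compact clA hcube).
  move=> x [h1 _] c /=; case/mxvec_indexP: c => a l.
  have := h1 (enum_val a); rewrite /Dx dotpE (bigD1 l) //= !mxE enum_valK.
  set y := x 0 (mxvec_index a l) => hy.
  have hs : 0 <= \sum_(i < N | i != l) dec x (enum_val a) 0 i * dec x (enum_val a) 0 i.
    by apply: sumr_ge0 => i _; rewrite -expr2 sqr_ge0.
  rewrite in_itv /=; apply/andP; split; nra.
have [m mA mmin] := EVT_min_rV (f := fun x => Dx x i0 j0)
  (ex_intro _ (enc q0) (PA q0 hq0)) cA (continuous_subspaceT (Dx_cont i0 j0)).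
exists (dec m); split; first by apply: AP; rewrite inE in mA.
move=> q hq; have := mmin (enc q); rewrite inE => /(_ (PA q hq)).
by rewrite /Dx !dec_enc.
Qed.

End Compact.

Section Simplex.
Context {R : realType} {V : finType}.

Lemma simplex : (1 < #|V|)%N -> exists q : V -> 'rV[R]_#|V|,
  forall i j, dotp (q i) (q j) = if i == j then 1 else -1 / (#|V|%:R - 1).
Proof.
move=> h1; set n : R := #|V|%:R.
have n1 : 1 < n by rewrite /n ltr1n.
pose kk := Num.sqrt (n / (n - 1)).
have kk2 : kk * kk = n / (n - 1).
  rewrite -expr2 sqr_sqrtr // divr_ge0 //; lra.
pose one : 'rV[R]_#|V| := const_mx 1.
have e1 : forall a, dotp (erow a) one = 1.
  by move=> a; rewrite dotpC dotp_erow mxE.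
have oo : dotp one one = n.
  by rewrite dotpE (eq_bigr (fun _ => 1)) ?sumr_const ?card_ord // => l _; rewrite mxE mulr1.
have ee : forall a b : 'I_#|V|, dotp (erow a : 'rV[R]_#|V|) (erow b) = (a == b)%:R.
  by move=> a b; rewrite dotp_erow !mxE eqxx eq_sym.
exists (fun i => kk *: (erow (enum_rank i) - n^-1 *: one)) => i j.
rewrite dotpZl dotpZr !dotpBl !dotpBr !dotpZl !dotpZr ee e1 (dotpC one) e1 oo.
rewrite (inj_eq enum_rank_inj) mulrA kk2.
have n0 : n != 0 by apply: lt0r_neq0; lra.
have n10 : n - 1 != 0 by apply: lt0r_neq0; lra.
case: eqP => _; rewrite ?mulr1n ?mulr0n; field; by rewrite n0 n10.
Qed.

End Simplex.

Section Main.
Local Open Scope classical_set_scope.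
Context {R : realType} {V : finType}.

Lemma inv_mono (a b : R) : 2 <= a -> 2 <= b -> -1 / (a - 1) <= -1 / (b - 1) -> a <= b.
Proof.
move=> a2 b2; rewrite !mulN1r lerN2 => h.
rewrite lef_pV2 ?posrE in h; lra.
Qed.

Lemma hard (G : rel V) d (p : V -> 'rV[R]_d) i0 j0 :
  is_graph G -> G i0 j0 ->
  (forall d' (q : V -> 'rV[R]_d'), optimal_vec_coloring G q ->
     dotp (q i0) (q j0) = dotp (p i0) (p j0)) ->
  dotp (p i0) (p j0) < -1 / (chi_v R G - 1) ->
  chi_v R G < chi_sv R G.
Proof.
move=> [Gsym Girr] hG0 huniq hlt.
set c := chi_v R G.
have ne : i0 != j0 by apply: contraTneq hG0 => ->; rewrite Girr.
have h1 : (1 < #|V|)%N by apply/card_gt1P; exists i0, j0.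
have [q0 hq0] := simplex (R:=R) h1.
set n : R := #|V|%:R.
have n2 : 2 <= n by rewrite /n (ler_nat R 2).
have sq0 : strict_vec_coloring G n q0.
  split=> [i|i j hij]; first by rewrite hq0 eqxx.
  by rewrite hq0; case: eqP => [e|//]; rewrite e Girr in hij.
have Svn : [set t : R | 2 <= t /\ exists d (p : V -> 'rV[R]_d), vec_coloring G t p] n.
  split=> //; exists #|V|, q0; split=> [i|i j hij]; first exact: sq0.1.
  by rewrite sq0.2.
have c2 : 2 <= c by apply: lb_le_inf; [exists n | move=> t []].
have lbv : forall t, [set t : R | 2 <= t /\ exists d (p : V -> 'rV[R]_d), vec_coloring G t p] t -> c <= t.
  by apply: ge_inf; exists 2 => t [].
have Pq0 : Pstr G i0 j0 q0.
  split=> [i|i j hij]; first by rewrite hq0 eqxx.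
  rewrite !hq0 (negPf ne); case: eqP => [e|//]; by rewrite e Girr in hij.
have [m [[mu me] mmin]] := @min_strict R V G i0 j0 (ex_intro _ q0 Pq0).
set s := dotp (m i0) (m j0) in me mmin *.
have s_le : s <= -1 / (n - 1) by have := mmin q0 Pq0; rewrite hq0 (negPf ne).
have s_neg : s < 0.
  have : 0 < (n - 1)^-1 by rewrite invr_gt0; lra.
  move: s_le; rewrite mulN1r; lra.
have s_ge : -1 <= s by apply: unit_dotp_ge.
set ts := 1 - s^-1.
have sn0 : s != 0 by rewrite lt_eqF.
have hts : -1 / (ts - 1) = s.
  have -> : ts - 1 = - s^-1 by rewrite /ts addrAC subrr add0r.
  by rewrite invrN invrK mulN1r opprK.
have ts2 : 2 <= ts.
  have hr : s * s^-1 = 1 by rewrite mulfV.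
  rewrite /ts; nra.
have mcol : vec_coloring G ts m.
  by split=> // i j h; rewrite me // hts.
have cts : c <= ts by apply: lbv; split=> //; exists #|V|, m.
have cltts : c < ts.
  rewrite lt_neqAle cts andbT; apply/eqP => e.
  have optm : optimal_vec_coloring G m by rewrite /optimal_vec_coloring -/c e.
  have := huniq _ m optm; rewrite -/s => e2.
  by move: hlt; rewrite -/c e hts -e2 ltxx.
apply: (lt_le_trans cltts); apply: lb_le_inf.
  by exists n; split=> //; exists #|V|, q0.
move=> t [t2 [d' [q [qu qe]]]].
have [q' hq'] := @dimred R V #|V| (leqnn _) _ q.
have Pq' : Pstr G i0 j0 q'.
  split=> [i|i j hij]; first by rewrite hq' qu.
  by rewrite !hq' !qe.
have := mmin q' Pq'; rewrite !hq' qe // -hts => h.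
exact: inv_mono.
Qed.

End Main.

Theorem theorem3p12 (R : realType) (V : finType) (H G : rel V)
  (d : nat) (p : V -> 'rV[R]_d) :
  is_graph H -> is_graph G ->
  optimal_vec_coloring H p ->
  subgraph H G -> subgraph G (Hprime H p) ->
  (optimal_vec_coloring G p /\ chi_v R H = chi_v R G) /\
  (uniquely_vector_colorable R H ->
     uniquely_vector_colorable R G /\
     (forall d' (q : V -> 'rV[R]_d'), optimal_vec_coloring G q ->
        forall i j, dotp (q i) (q j) = dotp (p i) (p j)) /\
     ((exists i j, G i j /\ dotp (p i) (p j) < - 1 / (chi_v R G - 1)) ->
        ~ strict_vec_coloring G (chi_v R G) p /\ chi_v R G < chi_sv R G)).
Proof.
move=> gH gG [pu pe] hHG hGH.
have pG : vec_coloring G (chi_v R H) p.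
  by split=> // i j /hGH /andP [].
have sub : forall t, [set t : R | 2 <= t /\ exists d (p : V -> 'rV[R]_d), vec_coloring G t p]%classic t ->
    [set t : R | 2 <= t /\ exists d (p : V -> 'rV[R]_d), vec_coloring H t p]%classic t.
  move=> t [t2 [d' [q [qu qe]]]]; split=> //; exists d', q; split=> // i j /hHG.
  exact: qe.
have ceq : chi_v R H = chi_v R G.
  have [[t0 ht0]|nE] := pselect (exists t, [set t : R | 2 <= t /\
      exists d (p : V -> 'rV[R]_d), vec_coloring H t p]%classic t).
    have c2 : 2 <= chi_v R H by apply: lb_le_inf; [exists t0 | move=> t []].
    have cG : [set t : R | 2 <= t /\ exists d (p : V -> 'rV[R]_d), vec_coloring G t p]%classic
        (chi_v R H) by split=> //; exists d, p.
    apply/eqP; rewrite eq_le; apply/andP; split.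
      apply: lb_le_inf; first by exists (chi_v R H).
      move=> t /sub; apply: ge_inf; by exists 2 => u [].
    by apply: ge_inf => //; exists 2 => u [].
  rewrite /chi_v; congr inf; apply/seteqP; split=> t ht.
    by case: nE; exists t.
  by case: nE; exists t; apply: sub.
have optGH : forall d' (q : V -> 'rV[R]_d'), optimal_vec_coloring G q ->
    optimal_vec_coloring H q.
  move=> d' q [qu qe]; split=> // i j /hHG h; rewrite ceq; exact: qe.
split.
  by split=> //; rewrite /optimal_vec_coloring -ceq.
move=> uH.
have gram : forall d' (q : V -> 'rV[R]_d'), optimal_vec_coloring G q ->
    forall i j, dotp (q i) (q j) = dotp (p i) (p j).
  by move=> d' q hq i j; apply: (uH _ _ _ _ (optGH _ _ hq)).
split.
  move=> d1 p1 d2 p2 h1 h2 i j; exact: (uH _ _ _ _ (optGH _ _ h1) (optGH _ _ h2)).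
split=> //.
move=> [i0 [j0 [hG0 hlt]]]; split.
  by move=> [_ hs]; move: hlt; rewrite hs // ltxx.
apply: (@hard R V G d p i0 j0 gG hG0 _ hlt) => d' q hq; exact: gram.
Qed.
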